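(* Let $b\ge1$, $k\in\mathbb{N}$, and let $A\subseteq\mathbb{N}$ with $\min(A)=0$ and $\max(A)\le k$. Let $f\in\mathcal{M}^b$ have set-array representation $(A,\emptyset,\ldots,\emptyset)$. Then $d(f)\le d([k]_b)$, and the inequality is strict for $f\neq[k]_b$.
   Context: $\mathbb{N}=\{0,1,\ldots\}$, $[k]=\{0,\ldots,k\}$. $\mathcal{M}^b$ is the set of finitely supported functions $f:\mathbb{N}\to\{0,\ldots,b\}$; its set-array representation is $(A_1,\ldots,A_b)$ with $A_i=\{a:f(a)\ge i\}$. Multiset addition is coordinatewise on set arrays: $(A_i)_i+(B_i)_i=(A_i+B_i)_i$, with $S+T=\{s+t:s\in S,t\in T\}$ and $S+\emptyset=\emptyset$. $g$ is a divisor of $f$ if $f=g+h$ for some $h\in\mathcal{M}^b$; $d(f)$ is the number of divisors of $f$. $[k]_b$ is the multiset with set-array representation $([k],\emptyset,\ldots,\emptyset)$. *)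

(* Defs.v *)
From mathcomp Require Import all_boot.
From mathcomp Require Import finmap zify.
Set Implicit Arguments. Unset Strict Implicit. Unset Printing Implicit Defensive.
Local Open Scope fset_scope.

Definition mset := {fsfun nat -> nat with 0%N}.

Definition inM (b : nat) (f : mset) : Prop := forall a : nat, (f a <= b)%N.

(* The i-th set of the set-array representation: A_i = {a : f(a) >= i}. *)
Definition layer (f : mset) (i : nat) : nat -> Prop := fun a => (i <= f a)%N.

Definition sumset (S T : nat -> Prop) : nat -> Prop :=
  fun n => exists s t, S s /\ T t /\ n = (s + t)%N.

(* f = g + h in M^b : coordinatewise sumsets of the set arrays (i = 1..b). *)
Definition is_msum (b : nat) (f g h : mset) : Prop :=
  forall i, (1 <= i <= b)%N ->
    forall n, layer f i n <-> sumset (layer g i) (layer h i) n.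

Definition mdivisor (b : nat) (g f : mset) : Prop :=
  inM b g /\ exists h, inM b h /\ is_msum b f g h.

Definition num_divisors (b : nat) (f : mset) (n : nat) : Prop :=
  exists s : seq mset, uniq s /\ size s = n /\ forall g, g \in s <-> mdivisor b g f.

(* [k]_b : set-array ([k], emptyset, ..., emptyset), i.e. indicator of {0..k}. *)
Definition kset (k : nat) : mset :=
  [fsfun x in [fset y | y in iota 0 k.+1] => 1%N | 0%N].

Lemma ksetE k a : kset k a = (a <= k)%N.
Proof.
rewrite /kset fsfunE.
have -> : (a \in [fset y | y in iota 0 k.+1]) = (a <= k)%N.
  apply/imfsetP/idP => [[y /=]|H]; first by rewrite ?inE mem_iota => H Ha; subst a; lia.
  by exists a => //=; rewrite ?inE mem_iota; lia.
by case: (a <= k)%N.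
Qed.

(* Main.v *)
Require Import Defs.
From mathcomp Require Import all_boot.
From mathcomp Require Import finmap zify.
From Stdlib Require Import ClassicalEpsilon.
Set Implicit Arguments. Unset Strict Implicit.
Local Open Scope fset_scope.

Definition mk (F : nat -> nat) (N : nat) : mset :=
  [fsfun x in [fset y | y in iota 0 N] => F x | 0%N].

Lemma mkE F N a : mk F N a = if (a < N)%N then F a else 0%N.
Proof.
rewrite /mk fsfunE.
have -> : (a \in [fset y | y in iota 0 N]) = (a < N)%N.
  apply/imfsetP/idP => [[y /=]|H]; first by rewrite ?inE mem_iota => H Ha; subst a; lia.
  by exists a => //=; rewrite ?inE mem_iota; lia.
by [].
Qed.

Lemma mset_ext (g1 g2 : mset) : (forall a, g1 a = g2 a) -> g1 = g2.
Proof. by move=> H; apply/fsfunP. Qed.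

Definition dec (P : Prop) : bool :=
  if excluded_middle_informative P then true else false.

Lemma decP P : dec P = true <-> P.
Proof. by rewrite /dec; case: excluded_middle_informative. Qed.

Lemma enum_bounded b k (P : mset -> Prop) :
  (forall g, P g -> forall a, (g a <= b)%N /\ ((k < a)%N -> g a = 0%N)) ->
  exists s : seq mset, uniq s /\ forall g, g \in s <-> P g.
Proof.
move=> HP.
pose conv (F : {ffun 'I_k.+1 -> 'I_b.+1}) :=
  mk (fun a => nat_of_ord (F (inord a))) k.+1.
exists (undup [seq g <- [seq conv F | F <- enum {ffun 'I_k.+1 -> 'I_b.+1}] | dec (P g)]).
split; first exact: undup_uniq.
move=> g; rewrite mem_undup mem_filter; split.
  by case/andP => /decP.
move=> Pg; apply/andP; split; first by apply/decP.
apply/mapP; exists [ffun i : 'I_k.+1 => (inord (g i) : 'I_b.+1)]; first by rewrite mem_enum.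
apply: mset_ext => a; rewrite mkE; case: ltnP => Ha.
  rewrite ffunE (inordK Ha) inordK //; have := (HP g Pg a).1; lia.
by rewrite (HP g Pg a).2.
Qed.

Lemma div_basic b (pA : pred nat) (f g : mset) :
  (1 <= b)%N -> pA 0%N -> (forall a, f a = pA a :> nat) -> mdivisor b g f ->
  inM b g /\ exists h : mset,
    forall n, pA n <-> exists s t, (0 < g s)%N /\ (0 < h t)%N /\ n = (s + t)%N.
Proof.
move=> b1 p0 fE [gb [h [hb Hs]]]; split => //; exists h => n.
have H1 : (1 <= 1 <= b)%N by rewrite leqnn b1.
split => [Hn|Hex].
  by apply (Hs 1%N H1 n).1; rewrite /layer fE Hn.
have := (Hs 1%N H1 n).2 Hex; rewrite /layer fE; by case: (pA n).
Qed.

Lemma sum0 (pA : pred nat) (g h : mset) :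
  pA 0%N ->
  (forall n, pA n <-> exists s t, (0 < g s)%N /\ (0 < h t)%N /\ n = (s + t)%N) ->
  (0 < g 0%N)%N /\ (0 < h 0%N)%N.
Proof.
move=> p0 H; have [s [t [gs [ht E]]]] := (H 0%N).1 p0.
have s0 : s = 0%N by lia.
have t0 : t = 0%N by lia.
by subst.
Qed.

Lemma div_bound b k (pA : pred nat) (f : mset) :
  (1 <= b)%N -> pA 0%N -> (forall a, pA a -> (a <= k)%N) ->
  (forall a, f a = pA a :> nat) ->
  forall g, mdivisor b g f -> forall a, (g a <= b)%N /\ ((k < a)%N -> g a = 0%N).
Proof.
move=> b1 p0 Hk fE g Hd a.
have [gb [h Hh]] := div_basic b1 p0 fE Hd.
have [g0 h0] := sum0 p0 Hh.
split; first exact: gb.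
move=> ka; apply/eqP; rewrite -leqn0 leqNgt; apply/negP => ga.
have : pA a by apply (Hh a).2; exists a, 0%N; rewrite addn0.
move/Hk; lia.
Qed.

Lemma list_exists b k (pA : pred nat) (f : mset) :
  (1 <= b)%N -> pA 0%N -> (forall a, pA a -> (a <= k)%N) ->
  (forall a, f a = pA a :> nat) ->
  exists s : seq mset, uniq s /\ forall g, g \in s <-> mdivisor b g f.
Proof.
move=> b1 p0 Hk fE; apply: (@enum_bounded b k).
exact: div_bound b1 p0 Hk fE.
Qed.

Definition mx (g : mset) : nat := \max_(a <- finsupp g) a.

Lemma mx_ge (g : mset) a : (0 < g a)%N -> (a <= mx g)%N.
Proof.
move=> ga; apply: (@leq_bigmax_seq _ _ _ (fun x => x)) => //.
by rewrite mem_finsupp; lia.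
Qed.

Lemma max_in (s : seq nat) : s != [::] -> \max_(i <- s) i \in s.
Proof.
elim: s => // x s IH _; rewrite big_cons inE.
case: (altP (s =P [::])) => [->|ns].
  by rewrite big_nil maxn0 eqxx.
have Hin := IH ns; rewrite /maxn; case: ifP => _.
  by apply/orP; right.
by rewrite eqxx.
Qed.

Lemma mx_in (g : mset) : (0 < g 0%N)%N -> (0 < g (mx g))%N.
Proof.
move=> g0.
have : mx g \in finsupp g.
  apply: max_in; apply/eqP => E.
  have H0 : (0%N \in finsupp g) by rewrite mem_finsupp; lia.
  have : 0%N \in enum_fset (finsupp g) := H0.
  by rewrite E.
by rewrite mem_finsupp; lia.
Qed.

Lemma kdiv b k (g : mset) m :
  (1 <= b)%N -> inM b g -> (forall a, (0 < g a)%N -> (a <= m)%N) -> (0 < g m)%N ->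
  (m <= k)%N ->
  (forall n, (n <= m)%N -> exists x, (x <= n)%N /\ (n - x <= k - m)%N /\ (0 < g x)%N) ->
  mdivisor b g (kset k).
Proof.
move=> b1 gb gm gmm mk Hc; split => //; exists (kset (k - m)); split.
  by move=> a; rewrite ksetE; case: (a <= k - m)%N.
move=> i /andP [i1 ib] n; rewrite /layer /sumset ksetE.
case: (ltnP 1 i) => i2.
  split; first by case: (n <= k)%N => /=; lia.
  by move=> [s [t [_ [+ _]]]]; rewrite ksetE; case: (t <= k - m)%N => /=; lia.
have -> : i = 1%N by lia.
split.
  move=> nk; have {}nk : (n <= k)%N by case: (n <= k)%N nk.
  case: (leqP n m) => nm.
    have [x [xn [nx gx]]] := Hc n nm.
    exists x, (n - x)%N; split => //; split; last by lia.
    by rewrite ksetE nx.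
  exists m, (n - m)%N; split => //; split; last by lia.
  by rewrite ksetE; have -> : (n - m <= k - m)%N by lia.
move=> [s [t [gs [ht E]]]].
have := gm s gs; move: ht; rewrite ksetE.
case: (leqP t (k - m)) => //= tk _ sm.
have -> : (n <= k)%N by lia.
by [].
Qed.

Lemma main_gen b k (pA : pred nat) (f : mset) :
  (1 <= b)%N -> pA 0%N -> (forall a, pA a -> (a <= k)%N) ->
  (forall a, f a = pA a :> nat) ->
  exists n m : nat,
    num_divisors b f n /\ num_divisors b (kset k) m /\
    (n <= m)%N /\ ((exists j, (j <= k)%N /\ ~~ pA j) -> (n < m)%N).
Proof.
move=> b1 p0 Hk fE.
have [s [us Hs]] := list_exists b1 p0 Hk fE.
have [t [ut Ht]] := @list_exists b k (fun a => (a <= k)%N) (kset k) b1 (leq0n k)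
   (fun a h => h) (@ksetE k).
pose phi (g : mset) := mk (fun a => if pA a then g a else (a <= mx g : nat)) (mx g).+1.
have gP : forall g, mdivisor b g f ->
   [/\ inM b g, (0 < g 0%N)%N, (forall a, (0 < g a)%N -> pA a) &
    exists h : mset, forall n, pA n <-> exists s t, (0 < g s)%N /\ (0 < h t)%N /\ n = (s + t)%N].
  move=> g Hd; have [gb [h Hh]] := div_basic b1 p0 fE Hd.
  have [g0 h0] := sum0 p0 Hh.
  split => //; last by exists h.
  by move=> a ga; apply (Hh a).2; exists a, 0%N; rewrite addn0.
have phiA : forall g, mdivisor b g f -> forall a, pA a -> phi g a = g a.
  move=> g Hd a pa; have [_ _ gA _] := gP g Hd.
  rewrite mkE pa; case: ltnP => //= am.
  apply/esym/eqP; rewrite -leqn0 leqNgt; apply/negP => ga.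
  have := mx_ge ga; lia.
have phiN : forall g, mdivisor b g f -> forall a, ~~ pA a -> g a = 0%N.
  move=> g Hd a pa; have [_ _ gA _] := gP g Hd.
  apply/eqP; rewrite -leqn0 leqNgt; apply/negP => ga.
  by move: (gA a ga); rewrite (negbTE pa).
have phiD : forall g, mdivisor b g f -> mdivisor b (phi g) (kset k).
  move=> g Hd; have [gb g0 gA [h Hh]] := gP g Hd.
  have gm := mx_in g0.
  apply: (@kdiv b k (phi g) (mx g)) => //.
  - move=> a; rewrite mkE; case: (a < (mx g).+1)%N => //.
    by case: (pA a) => //; case: (a <= mx g)%N.
  - by move=> a; rewrite mkE; case: (ltnP a (mx g).+1) => am _ //; lia.
  - by rewrite phiA //; apply: gA.
  - by apply: Hk; apply: gA.
  - move=> n nm; case: (boolP (pA n)) => pn.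
      have [s0 [t0 [gs [ht E]]]] := (Hh n).1 pn.
      exists s0; split; first by lia.
      have pm : pA (mx g + t0)%N by apply (Hh _).2; exists (mx g), t0.
      have := Hk _ pm => mk0.
      split; first by lia.
      by rewrite phiA //; apply: gA.
    exists n; split => //; split; first by lia.
    by rewrite mkE (negbTE pn) ltnS nm.
have inj : {in s &, injective phi}.
  move=> x y /Hs hx /Hs hy E; apply: mset_ext => a.
  case: (boolP (pA a)) => pa.
    by rewrite -(phiA x) // -(phiA y) // E.
  by rewrite !phiN.
have sub : {subset map phi s <= t}.
  by move=> y /mapP [g /Hs gs ->]; apply/Ht; apply: phiD.
exists (size s), (size t); split; first by exists s.
split; first by exists t.
split.
  by rewrite -(size_map phi); apply: uniq_leq_size => //; rewrite map_inj_in_uniq.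
move=> [j [jk pj]].
have kj : kset j \in t.
  apply/Ht; apply: (@kdiv b k (kset j) j) => //.
  - by move=> a; rewrite ksetE; case: (a <= j)%N.
  - by move=> a; rewrite ksetE; case: (a <= j)%N.
  - by rewrite ksetE leqnn.
  - by move=> n nj; exists n; rewrite ksetE nj; split => //; lia.
have nin : kset j \notin map phi s.
  apply/mapP => [[g /Hs gs E]].
  have [_ g0 gA _] := gP g gs.
  have := ksetE j j; rewrite leqnn E mkE (negbTE pj) /=.
  case: ltnP => //= jm _.
  have gm := mx_in g0.
  have := ksetE j (mx g); rewrite E phiA //; last by apply: gA.
  move=> E2; have : (mx g <= j)%N by move: gm; rewrite E2; case: (mx g <= j)%N.
  move=> mj; have ej : mx g = j by lia.
  by move: pj; rewrite -ej gA.
rewrite -(size_map phi).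
have := @uniq_leq_size _ (kset j :: map phi s) t.
rewrite /= nin map_inj_in_uniq // us => /(_ isT); apply.
by move=> y; rewrite inE => /predU1P [->|/sub].
Qed.

Theorem mainTheorem20 (b k : nat) (A : {fset nat}) (f : mset) :
  (1 <= b)%N ->
  0%N \in A ->
  (forall a, a \in A -> (a <= k)%N) ->
  (forall a : nat, f a = (a \in A) :> nat) ->
  exists n m : nat,
    num_divisors b f n /\ num_divisors b (kset k) m /\
    (n <= m)%N /\ (f != kset k -> (n < m)%N).
Proof.
move=> b1 A0 Hk fE.
have [n [m [Hn [Hm [nm Hs]]]]] := @main_gen b k (fun a => a \in A) f b1 A0 Hk fE.
exists n, m; split => //; split => //; split => // fk; apply: Hs.
case: (boolP (has (fun j => j \notin A) (iota 0 k.+1))).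
  by move/hasP => [j]; rewrite mem_iota => jk jA; exists j; split => //; lia.
move/hasPn => H; move/eqP: fk; case; apply: mset_ext => a.
rewrite fE ksetE; case: (boolP (a \in A)) => aA.
  by rewrite (Hk _ aA).
case: (leqP a k) => // ak.
by move: (H a); rewrite mem_iota aA /= => /(_ ltac:(lia)).
Qed.
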